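(* Let $k\ge 2$ and let $G$ be a finite simple $r$-regular graph admitting a closed neighborhood balanced $k$-coloring $c$ with color classes $V_1,\dots,V_k$. Then for every $i$, $|V_i|=\frac{|V(G)|}{k}$ and $|E(V_i,V_i)|=\frac{(r+1-k)|V(G)|}{2k^2}$, and for all distinct $i,j$, $|E(V_i,V_j)|=\frac{(r+1)|V(G)|}{k^2}$.
   Context: For a vertex $v$, $N[v]=\{v\}\cup\{u : uv\in E(G)\}$. A closed neighborhood balanced $k$-coloring of $G$ is a map $c: V(G)\to\{1,\dots,k\}$ such that for every vertex $v$ the numbers $|\{u\in N[v] : c(u)=i\}|$, $i=1,\dots,k$, are all equal; its color classes are $V_i=c^{-1}(i)$. For $X,Y\subseteq V(G)$, $E(X,Y)$ is the set of edges joining a vertex of $X$ to a vertex of $Y$; $E(X,X)$ is the set of edges with both endpoints in $X$. *)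

(* Defs.v *)
From mathcomp Require Import all_boot all_order all_algebra.
Set Implicit Arguments. Unset Strict Implicit. Unset Printing Implicit Defensive.

Definition simple_graph (T : finType) (e : rel T) : Prop :=
  symmetric e /\ irreflexive e.

Definition nbhd (T : finType) (e : rel T) (v : T) : {set T} :=
  [set u | e v u].
Definition cnbhd (T : finType) (e : rel T) (v : T) : {set T} :=
  v |: nbhd e v.

Definition regular (T : finType) (e : rel T) (r : nat) : Prop :=
  forall v : T, #|nbhd e v| = r.

(* closed neighbourhood balanced k-colouring c : T -> 'I_k
   (colours 1..k are represented by 'I_k) *)
Definition cnb_coloring (T : finType) (e : rel T) (k : nat) (c : T -> 'I_k) : Prop :=
  forall (v : T) (i j : 'I_k),
    #|[set u in cnbhd e v | c u == i]| = #|[set u in cnbhd e v | c u == j]|.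

Definition color_class (T : finType) (k : nat) (c : T -> 'I_k) (i : 'I_k) : {set T} :=
  [set v | c v == i].

Definition edges_between (T : finType) (e : rel T) (X Y : {set T}) : {set {set T}} :=
  [set s : {set T} | [exists x in X, exists y in Y, e x y && (s == [set x; y])]].

(* Main.v *)
Require Import Defs.
From mathcomp Require Import all_boot all_order all_algebra.
Import GRing.Theory Num.Theory.

Section S.
Variable T : finType.

Lemma card_sumP (P : pred T) : #|[set y | P y]| = \sum_y (P y : nat).
Proof.
rewrite -sum1_card big_mkcond /=; apply: eq_bigr => y _; rewrite inE; by case: (P y).
Qed.

Lemma card_rel (A : T -> T -> bool) :
  #|[set p : T * T | A p.1 p.2]| = \sum_x #|[set y | A x y]|.
Proof.
rewrite -sum1_card big_mkcond /=.
under [RHS]eq_bigr => x _ do rewrite card_sumP.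
rewrite pair_bigA /=; apply: eq_bigr => -[x y] _; rewrite inE /=; by case: (A x y).
Qed.

Lemma card_rel_swap (A : T -> T -> bool) :
  \sum_x #|[set y | A x y]| = \sum_y #|[set x | A x y]|.
Proof.
under eq_bigr => x _ do rewrite card_sumP.
under [RHS]eq_bigr => x _ do rewrite card_sumP.
exact: exchange_big.
Qed.

Lemma card_part k (c : T -> 'I_k) (A : {set T}) :
  #|A| = \sum_(j : 'I_k) #|[set u in A | c u == j]|.
Proof.
rewrite -sum1_card (partition_big c predT) //=.
apply: eq_bigr => j _; rewrite -sum1_card; apply: eq_bigl => u; by rewrite inE.
Qed.

Lemma sum_if (P : pred T) n : \sum_u (if P u then n else 0) = #|[set u | P u]| * n.
Proof. by rewrite -big_mkcond sum_nat_const cardsE. Qed.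

Variables (e : rel T) (r k : nat) (c : T -> 'I_k).
Hypotheses (hk : (2 <= k)%N) (hs : simple_graph e) (hr : regular e r) (hc : cnb_coloring e c).

Let m := r.+1 %/ k.

Lemma cn_card x : #|cnbhd e x| = r.+1.
Proof.
rewrite /cnbhd cardsU1 hr /nbhd inE. by case: hs => _ ->.
Qed.

Lemma k0 : 0 < k. Proof. by apply: leq_trans hk. Qed.

Lemma a_eq x j : #|[set u in cnbhd e x | c u == j]| = m.
Proof.
pose i0 : 'I_k := Ordinal k0.
have H : r.+1 = k * #|[set u in cnbhd e x | c u == i0]|.
  rewrite -(cn_card x) (card_part _ c).
  under eq_bigr => j' _ do rewrite (hc x j' i0).
  by rewrite big_const_ord iter_addn_0 mulnC.
by rewrite /m H mulKn ?k0 // hc.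
Qed.

Variable x0 : T.

Lemma km : r.+1 = k * m.
Proof.
rewrite -(cn_card x0) (card_part _ c).
under eq_bigr => j' _ do rewrite a_eq.
by rewrite big_const_ord iter_addn_0 mulnC.
Qed.

Lemma m_pos : 0 < m.
Proof. by move: km; case: m => //; rewrite muln0. Qed.

Lemma deg x j : #|[set y | (c y == j) && e x y]| = m - (c x == j).
Proof.
rewrite -(a_eq x j).
case: eqP => [<-|ne].
  have -> : [set u in cnbhd e x | c u == c x] = x |: [set y | (c y == c x) && e x y].
    apply/setP => u; rewrite !inE.
    case: (eqVneq u x) => [->|_] /=; by rewrite ?eqxx // andbC.
  rewrite cardsU1 inE; case: hs => _ ->; by rewrite andbF /= subn1 add1n.
rewrite subn0; apply: eq_card => u; rewrite !inE.
case: (eqVneq u x) => [->|]; last by rewrite andbC.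
by case: hs => _ ->; rewrite andbF /=; apply/esym/eqP.
Qed.

Lemma class_card i : #|T| = #|color_class c i| * k.
Proof.
apply/eqP; rewrite -(eqn_pmul2r m_pos) -mulnA -km; apply/eqP.
transitivity (\sum_x #|[set u | (u \in cnbhd e x) && (c u == i)]|).
  under eq_bigr => x _ do rewrite a_eq; by rewrite (sum_nat_cond_const predT) cardsT.
rewrite card_rel_swap.
transitivity (\sum_u (if c u == i then r.+1 else 0)); last first.
  by rewrite sum_if.
apply: eq_bigr => u _; case: ifP => h.
  rewrite -(cn_card u); apply: eq_card => x; rewrite !inE andbT.
  case: hs => hsym _; by rewrite (eq_sym x) hsym.
by apply: eq_card0 => x; rewrite !inE andbF.
Qed.

Lemma offdiag i j : i != j ->
  #|edges_between e (color_class c i) (color_class c j)| = #|color_class c i| * m.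
Proof.
move=> ne.
pose P := [set p : T * T | (c p.1 == i) && ((c p.2 == j) && e p.1 p.2)].
have -> : edges_between e (color_class c i) (color_class c j)
          = (fun p : T * T => [set p.1; p.2]) @: P.
  apply/setP => s; rewrite inE; apply/existsP/imsetP.
    case=> x /andP[xi /existsP[y /andP[yj /andP[exy /eqP->]]]].
    exists (x, y) => //.
    rewrite /color_class !inE in xi yj; by rewrite inE /= xi yj exy.
  case=> -[x y]; rewrite inE /= => /and3P[xi yj exy] ->.
  exists x; rewrite /color_class inE xi /=; apply/existsP; exists y.
  by rewrite inE yj exy eqxx.
rewrite card_in_imset.
  rewrite /P (card_rel (fun x y => (c x == i) && ((c y == j) && e x y))).
  transitivity (\sum_x (if c x == i then m else 0)); last by rewrite sum_if.
  apply: eq_bigr => x _; case: ifP => h.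
    have := deg x j; rewrite (eqP h) (negbTE ne) subn0 => <-.
    by apply: eq_card => y; rewrite !inE.
  by apply: eq_card0 => y; rewrite !inE.
move=> [x y] [x' y']; rewrite !inE /= => /and3P[xi yj _] /and3P[x'i y'j _] E.
have hx : x \in [set x'; y'] by rewrite -E set21.
have hy : y \in [set x'; y'] by rewrite -E set22.
move: hx hy; rewrite !inE => /orP[/eqP hx|/eqP hx] /orP[/eqP hy|/eqP hy].
- by case/negP: ne; rewrite -(eqP xi) -(eqP yj) hx hy.
- by rewrite hx hy.
- by case/negP: ne; rewrite -(eqP y'j) -(eqP xi) hx.
- by case/negP: ne; rewrite -(eqP yj) -(eqP xi) hx hy.
Qed.

Lemma diag i :
  2 * #|edges_between e (color_class c i) (color_class c i)| = #|color_class c i| * (m - 1).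
Proof.
case: hs => hsym hirr.
pose P := [set p : T * T | (c p.1 == i) && ((c p.2 == i) && e p.1 p.2)].
pose Q := [set p : T * T | enum_rank p.1 < enum_rank p.2].
have cP : #|P| = #|color_class c i| * (m - 1).
  rewrite /P (card_rel (fun x y => (c x == i) && ((c y == i) && e x y))).
  transitivity (\sum_x (if c x == i then m - 1 else 0)); last by rewrite sum_if.
  apply: eq_bigr => x _; case: ifP => h.
    have := deg x i; rewrite (eqP h) eqxx => <-.
    by apply: eq_card => y; rewrite !inE.
  by apply: eq_card0 => y; rewrite !inE.
have sw : P :\: Q = (fun p : T * T => (p.2, p.1)) @^-1: (P :&: Q).
  apply/setP => -[x y]; rewrite !inE /= (hsym y x).
  case exy : (e x y); last by rewrite !andbF.
  have nxy : enum_rank x != enum_rank y.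
    rewrite (inj_eq enum_rank_inj); apply/eqP => h; by rewrite h hirr in exy.
  rewrite -leqNgt; case: (ltngtP (enum_rank y) (enum_rank x)) => hl /=; last by case/negP: nxy; apply/eqP/val_inj.
  1,2: by case: (c x == i); case: (c y == i).
have c2 : #|P| = 2 * #|P :&: Q|.
  rewrite -(cardsID Q P) sw card_preimset ?addnn ?mul2n //.
  by move=> [? ?] [? ?] [-> ->].
rewrite -cP c2; congr (2 * _).
have -> : edges_between e (color_class c i) (color_class c i)
          = (fun p : T * T => [set p.1; p.2]) @: (P :&: Q).
  apply/setP => s; rewrite inE; apply/existsP/imsetP.
    case=> x /andP[xi /existsP[y /andP[yj /andP[exy /eqP->]]]].
    rewrite /color_class !inE in xi yj.
    have nxy : enum_rank x != enum_rank y.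
      rewrite (inj_eq enum_rank_inj); apply/eqP => h; by rewrite h hirr in exy.
    case: (ltngtP (enum_rank x) (enum_rank y)) => hl.
    + exists (x, y) => //; by rewrite !inE /= xi yj exy hl.
    + exists (y, x); last by rewrite /= setUC.
      by rewrite !inE /= xi yj hsym exy hl.
    + by case/negP: nxy; apply/eqP/val_inj.
  case=> -[x y]; rewrite !inE /= => /andP[/and3P[xi yj exy] _] ->.
  exists x; rewrite /color_class inE xi /=; apply/existsP; exists y.
  by rewrite inE yj exy eqxx.
rewrite card_in_imset //.
move=> [x y] [x' y']; rewrite !inE /= => /andP[_ lt] /andP[_ lt'] E.
have hx : x \in [set x'; y'] by rewrite -E set21.
have hy : y \in [set x'; y'] by rewrite -E set22.
move: hx hy; rewrite !inE => /orP[/eqP hx|/eqP hx] /orP[/eqP hy|/eqP hy].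
- by move: lt; rewrite hx hy ltnn.
- by rewrite hx hy.
- by move: lt lt'; rewrite hx hy => a b; move: (ltn_trans a b); rewrite ltnn.
- by move: lt; rewrite hx hy ltnn.
Qed.
End S.

From mathcomp Require Import ring.
Local Open Scope ring_scope.

Theorem theorem2p10 (T : finType) (e : rel T) (r k : nat) (c : T -> 'I_k) :
  (2 <= k)%N ->
  simple_graph e ->
  regular e r ->
  cnb_coloring e c ->
  (forall i : 'I_k,
     (#|color_class c i|%:R : rat) = #|T|%:R / k%:R
     /\ (#|edges_between e (color_class c i) (color_class c i)|%:R : rat)
        = ((r%:R + 1 - k%:R) * #|T|%:R) / (2 * k%:R ^+ 2))
  /\ (forall i j : 'I_k, i != j ->
     (#|edges_between e (color_class c i) (color_class c j)|%:R : rat)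
       = ((r%:R + 1) * #|T|%:R) / (k%:R ^+ 2)).
Proof.
move=> hk hs hr hc.
have kn0 : (k%:R : rat) != 0 by rewrite pnatr_eq0 -lt0n; by move: hk; case: (k).
case: (pickP (fun _ : T => true)) => [x0 _|h0]; last first.
  have cT : #|T| = 0%N by apply: eq_card0 => x; by move: (h0 x).
  have cE : forall X Y, #|edges_between e X Y| = 0%N.
    move=> X Y; apply: eq_card0 => s; rewrite inE; apply/existsP => -[x].
    by move: (h0 x).
  have cV : forall i, #|color_class c i| = 0%N.
    by move=> i; apply/eqP; rewrite -leqn0 -cT max_card.
  split; [move=> i; rewrite cE cV cT | move=> i j _; rewrite cE cT];
    by rewrite ?mulr0 ?mul0r.
set m := (r.+1 %/ k)%N.
have Hkm := km _ _ _ _ _ hk hs hr hc x0.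
have Hm := m_pos _ _ _ _ _ hk hs hr hc x0.
have Hr : (r%:R + 1 : rat) = k%:R * m%:R by rewrite natr1 Hkm natrM.
split.
  move=> i; rewrite (class_card _ _ _ _ _ hk hs hr hc x0 i) natrM; split.
    by rewrite mulfK.
  have H2 := diag _ _ _ _ _ hk hs hr hc i.
  have H2' : (#|edges_between e (color_class c i) (color_class c i)|%:R : rat)
     = #|color_class c i|%:R * (m%:R - 1) / 2.
    have := congr1 (fun n : nat => (n%:R : rat)) H2; rewrite /= !natrM natrB //.
    by move=> HH; rewrite -HH; field.
  rewrite H2' Hr; field; by rewrite kn0.
move=> i j ne; rewrite (offdiag _ _ _ _ _ hk hs hr hc _ _ ne) (class_card _ _ _ _ _ hk hs hr hc x0 i) !natrM Hr.
field; by rewrite kn0.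
Qed.
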